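(* Let $L$ be a finite-dimensional Lie superalgebra over a field of characteristic different from $2,3$, and let $(T_1,\lambda_1)$ and $(T_2,\lambda_2)$ be two universal elements of $C(L)$. Then $T_1\cong T_2$.
   Context: Lie superalgebras: $\mathbb{Z}_2$-graded algebras with graded skew-symmetric bracket satisfying the graded Jacobi identity; $\mathrm{Hom}(K,L)$ denotes Lie superalgebra homomorphisms (even, bracket-preserving). $Z(K)$ is the center, $K'=[K,K]$. $C(L)$ is the class of pairs $(K,\lambda)$ with $K$ a Lie superalgebra and $\lambda\in\mathrm{Hom}(K,L)$ surjective with $\mathrm{Ker}(\lambda)\subseteq K'\cap Z(K)$. An element $(T,\sigma)\in C(L)$ is universal if for every $(K,\lambda)\in C(L)$ there exists $\tau\in\mathrm{Hom}(T,K)$ with $\lambda\circ\tau=\sigma$. *)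

(* Defs.v *)
From HB Require Import structures.
From mathcomp Require Import all_boot all_order all_algebra.
Set Implicit Arguments. Unset Strict Implicit. Unset Printing Implicit Defensive.
Import GRing.Theory.
Local Open Scope ring_scope.

(* The carrier is an F-vector space V; the Z_2-grading V = V_0 (+) V_1 is
   encoded by the (linear, idempotent) projection [proj0] onto the even part
   along the odd part: V_0 = {x | proj0 x = x}, V_1 = {x | proj0 x = 0}. *)

Definition homog (F : fieldType) (V : lmodType F) (p0 : V -> V) (b : bool) (x : V) : Prop :=
  if b then p0 x = 0 else p0 x = x.

Definition ssign (F : fieldType) (a b : bool) : F := (-1) ^+ (a && b).

Record lieSuper (F : fieldType) := LieSuper {
  ls_car :> lmodType F;
  proj0 : ls_car -> ls_car;
  sbr : ls_car -> ls_car -> ls_car;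
  proj0_lin : forall (c : F) (x y : ls_car), proj0 (c *: x + y) = c *: proj0 x + proj0 y;
  proj0_id : forall x, proj0 (proj0 x) = proj0 x;
  sbr_linl : forall (c : F) (x y z : ls_car), sbr (c *: x + y) z = c *: sbr x z + sbr y z;
  sbr_linr : forall (c : F) (x y z : ls_car), sbr x (c *: y + z) = c *: sbr x y + sbr x z;
  sbr_graded : forall (a b : bool) (x y : ls_car),
      homog proj0 a x -> homog proj0 b y -> homog proj0 (addb a b) (sbr x y);
  sbr_skew : forall (a b : bool) (x y : ls_car),
      homog proj0 a x -> homog proj0 b y -> sbr x y = - (ssign F a b *: sbr y x);
  sbr_jacobi : forall (a b c : bool) (x y z : ls_car),
      homog proj0 a x -> homog proj0 b y -> homog proj0 c z ->
      ssign F a c *: sbr x (sbr y z) + ssign F a b *: sbr y (sbr z x)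
        + ssign F b c *: sbr z (sbr x y) = 0
}.

Arguments proj0 {F} l _.
Arguments sbr {F} l _ _.

Section Defs.
Variable F : fieldType.

Definition findim (L : lieSuper F) : Prop :=
  exists s : seq L, forall x : L,
    exists c : 'I_(size s) -> F, x = \sum_(i < size s) c i *: nth 0 s i.

Definition is_lshom (K L : lieSuper F) (f : K -> L) : Prop :=
  (forall (c : F) (x y : K), f (c *: x + y) = c *: f x + f y) /\
  (forall x : K, f (proj0 K x) = proj0 L (f x)) /\
  (forall x y : K, f (sbr K x y) = sbr L (f x) (f y)).

Definition in_center (K : lieSuper F) (x : K) : Prop :=
  forall y : K, sbr K x y = 0.

Definition in_derived (K : lieSuper F) (x : K) : Prop :=
  exists s : seq (K * K), x = \sum_(p <- s) sbr K p.1 p.2.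

Definition inC (L K : lieSuper F) (lam : K -> L) : Prop :=
  is_lshom lam /\ (forall y : L, exists x : K, lam x = y) /\
  (forall x : K, lam x = 0 -> in_derived x /\ in_center x).

Definition universalC (L T : lieSuper F) (sigma : T -> L) : Prop :=
  inC sigma /\
  forall (K : lieSuper F) (lam : K -> L), inC lam ->
    exists tau : T -> K, is_lshom tau /\ (forall t : T, lam (tau t) = sigma t).

Definition ls_iso (K L : lieSuper F) : Prop :=
  exists f : K -> L, is_lshom f /\ bijective f.

End Defs.

(* Main.v *)
Require Import Defs.
From mathcomp Require Import all_boot all_order all_algebra.
Local Open Scope ring_scope.
Import GRing.Theory.

Set Implicit Arguments. Unset Strict Implicit.
Section Aux.
Variable F : fieldType.

Definition linP (U V : lmodType F) (f : U -> V) :=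
  forall (c : F) x y, f (c *: x + y) = c *: f x + f y.

Lemma linP0 (U V : lmodType F) (f : U -> V) : linP f -> f 0 = 0.
Proof.
move=> h; have e := h 1 0 0; rewrite !scale1r !addr0 in e.
have : f 0 + f 0 - f 0 = f 0 - f 0 by rewrite -e.
by rewrite addrK subrr.
Qed.

Lemma linPD (U V : lmodType F) (f : U -> V) : linP f -> forall x y, f (x + y) = f x + f y.
Proof. by move=> h x y; have := h 1 x y; rewrite !scale1r. Qed.

Lemma linPN (U V : lmodType F) (f : U -> V) : linP f -> forall x, f (- x) = - f x.
Proof.
by move=> h x; have := h (-1) x 0; rewrite addr0 (linP0 h) addr0 !scaleN1r.
Qed.

Lemma linPB (U V : lmodType F) (f : U -> V) : linP f -> forall x y, f (x - y) = f x - f y.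
Proof. by move=> h x y; rewrite (linPD h) (linPN h). Qed.

Lemma hom_lin (K L : lieSuper F) (f : K -> L) : is_lshom f -> linP f.
Proof. by case. Qed.

Lemma sbrl_lin (K : lieSuper F) (z : K) : linP (fun x : K => sbr K x z).
Proof. by move=> c x y; apply: sbr_linl. Qed.

Lemma sbrr_lin (K : lieSuper F) (x : K) : linP (fun z : K => sbr K x z).
Proof. by move=> c y z; apply: sbr_linr. Qed.

Lemma p0_lin (K : lieSuper F) : linP (proj0 K).
Proof. by move=> c x y; apply: proj0_lin. Qed.

Lemma homog_zero (K : lieSuper F) (b : bool) (u v : K) :
  homog (proj0 K) b u -> homog (proj0 K) (~~ b) v -> u + v = 0 -> u = 0.
Proof.
case: b => /= hu hv e.
- have := congr1 (proj0 K) e; rewrite (linPD (@p0_lin K)) hu hv (linP0 (@p0_lin K)) add0r => v0.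
  by move: e; rewrite v0 addr0.
- have := congr1 (proj0 K) e; rewrite (linPD (@p0_lin K)) hu hv (linP0 (@p0_lin K)) addr0.
  by [].
Qed.

Lemma homog0 (K : lieSuper F) (x : K) : homog (proj0 K) false (proj0 K x).
Proof. by rewrite /homog proj0_id. Qed.

Lemma homog1 (K : lieSuper F) (x : K) : homog (proj0 K) true (x - proj0 K x).
Proof. by rewrite /homog (linPB (@p0_lin K)) proj0_id subrr. Qed.

Lemma central_comm (K : lieSuper F) (d : K) : in_center d -> forall a, sbr K a d = 0.
Proof.
move=> hd a.
have split_d : d = proj0 K d + (d - proj0 K d) by rewrite addrC subrK.
have split_a : a = proj0 K a + (a - proj0 K a) by rewrite addrC subrK.
have key : forall (i : bool) (ai : K), homog (proj0 K) i ai ->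
   sbr K (proj0 K d) ai = 0 /\ sbr K (d - proj0 K d) ai = 0.
  move=> i ai hai.
  have s0 : sbr K (proj0 K d) ai + sbr K (d - proj0 K d) ai = 0.
    by rewrite -(linPD (sbrl_lin ai)) -split_d hd.
  have g0 := sbr_graded (homog0 d) hai.
  have g1 := sbr_graded (homog1 d) hai.
  have g1' : homog (proj0 K) (~~ (addb false i)) (sbr K (d - proj0 K d) ai).
    exact: g1.
  have z0 := homog_zero g0 g1' s0.
  split => //; by move: s0; rewrite z0 add0r.
have Z : forall (i j : bool) (ai : K), homog (proj0 K) i ai -> forall dj,
   homog (proj0 K) j dj -> (dj = proj0 K d \/ dj = d - proj0 K d) -> sbr K ai dj = 0.
  move=> i j ai hai dj hdj [] ->.
  - by rewrite (sbr_skew hai (homog0 d)); have [-> _] := key _ _ hai; rewrite scaler0 oppr0.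
  - by rewrite (sbr_skew hai (homog1 d)); have [_ ->] := key _ _ hai; rewrite scaler0 oppr0.
have -> : sbr K a d = sbr K a (proj0 K d) + sbr K a (d - proj0 K d).
  by rewrite -(linPD (sbrr_lin a)) -split_d.
have E1 : forall y, sbr K a y = sbr K (proj0 K a) y + sbr K (a - proj0 K a) y.
  by move=> y; rewrite -(linPD (sbrl_lin y)) -split_a.
rewrite !E1.
rewrite (Z _ _ _ (homog0 a) _ (homog0 d)); last by left.
rewrite (Z _ _ _ (homog0 a) _ (homog1 d)); last by right.
rewrite (Z _ _ _ (homog1 a) _ (homog0 d)); last by left.
rewrite (Z _ _ _ (homog1 a) _ (homog1 d)); last by right.
by rewrite !addr0.
Qed.

Lemma linP_sum (U V : lmodType F) (f : U -> V) (I : Type) (s : seq I) (g : I -> U) :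
  linP f -> f (\sum_(p <- s) g p) = \sum_(p <- s) f (g p).
Proof.
move=> h; elim: s => [|p s IH]; first by rewrite !big_nil (linP0 h).
by rewrite !big_cons (linPD h) IH.
Qed.

Lemma fix_derived (L T : lieSuper F) (sig : T -> L) (phi : T -> T) :
  inC sig -> is_lshom phi -> (forall x, sig (phi x) = sig x) ->
  forall x, phi (phi x) = phi x + phi x - x.
Proof.
move=> [hs [_ hk]] hp e.
have lp := hom_lin hp; have ls := hom_lin hs.
have kerd : forall x, sig (phi x - x) = 0 by move=> x; rewrite (linPB ls) e subrr.
have onbr : forall a b, phi (sbr T a b) = sbr T a b.
  move=> a b; have [_ [_ ->]] := hp.
  have ea : phi a = a + (phi a - a) by rewrite addrC subrK.
  have eb : phi b = b + (phi b - b) by rewrite addrC subrK.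
  rewrite ea eb (linPD (sbrl_lin _)) (linPD (sbrr_lin _)).
  have [_ ca] := hk _ (kerd a); have [_ cb] := hk _ (kerd b).
  by rewrite ca (central_comm cb) addr0 addr0.
move=> x; have [[s Hs] _] := hk _ (kerd x).
have : phi (phi x - x) = phi x - x.
  rewrite Hs (linP_sum _ _ lp); apply: eq_bigr => p _; exact: onbr.
rewrite (linPB lp) => e2.
have -> : phi (phi x) = phi (phi x) - phi x + phi x by rewrite subrK.
by rewrite e2 addrAC.
Qed.
End Aux.

Lemma hom_comp (F : fieldType) (A B C : lieSuper F) (f : A -> B) (g : B -> C) :
  is_lshom f -> is_lshom g -> is_lshom (fun x => g (f x)).
Proof.
move=> [f1 [f2 f3]] [g1 [g2 g3]]; split; last split.
- by move=> c x y; rewrite f1 g1.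
- by move=> x; rewrite f2 g2.
- by move=> x y; rewrite f3 g3.
Qed.
Unset Implicit Arguments.

Theorem theorem4p6 (F : fieldType) (char2 : (2%:R : F) != 0) (char3 : (3%:R : F) != 0)
  (L : lieSuper F) (fdL : findim L)
  (T1 : lieSuper F) (lam1 : T1 -> L) (T2 : lieSuper F) (lam2 : T2 -> L) :
  universalC lam1 -> universalC lam2 -> ls_iso T1 T2.
Proof.
move=> [C1 U1] [C2 U2].
have [t1 [h1 e1]] := U1 _ _ C2.
have [t2 [h2 e2]] := U2 _ _ C1.
have P1 := fix_derived C1 (hom_comp h1 h2) (fun x => etrans (e2 _) (e1 x)).
have P2 := fix_derived C2 (hom_comp h2 h1) (fun x => etrans (e1 _) (e2 x)).
have l1 := hom_lin h1; have l2 := hom_lin h2.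
exists t1; split => //.
exists (fun y => t2 y + t2 y - t2 (t1 (t2 y))).
- move=> x /=; rewrite P1; by rewrite opprB addrCA subrr addr0.
- move=> y /=; rewrite (linPB l1) (linPD l1) P2.
  by rewrite opprB addrCA subrr addr0.
Qed.
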